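(* Let $K$ be a field and $S=\langle x_1,\ldots,x_n\rangle$ a right non-degenerate semigroup of skew type, $X=\{x_1,\ldots,x_n\}$. Then: (1) for each integer $i$ with $1\le i\le n$, the set $S_i=\bigcup_{Y\subseteq X,\,|Y|=i}S_Y$ is an ideal of $S$, and $S_X=S_n\subseteq S_{n-1}\subseteq\cdots\subseteq S_1\subseteq S$; (2) $S$ is the union of sets of the form $\{y_1^{a_1}\cdots y_k^{a_k}\mid a_i\ge0\}$, where $y_1,\ldots,y_k\in X$ and $k\le n$. In particular, $\mathrm{GK}(K[S])\le n$.
   Context: A semigroup of skew type is a monoid $S$ with a monoid presentation $S=\langle x_1,\ldots,x_n \mid x_ix_j=x_kx_l\rangle$ consisting of $\binom{n}{2}$ relations, each of the form $x_ix_j=x_kx_l$ with $i\neq j$, $k\neq l$, such that every word $x_px_q$ with $p\neq q$ appears (as one side) in exactly one of the relations. For $a,b\in X$, the partner of $ab$ is the other side of the unique defining relation containing $ab$ if $a\neq b$, and $ab$ itself if $a=b$. $S$ is right non-degenerate if for every $x\in X$ the map $X\to X$ sending $y$ to the first letter of the partner of $xy$ is surjective. For $Y\subseteq X$, $S_Y=\bigcap_{y\in Y}yS$. $\mathrm{GK}$ is Gelfand–Kirillov dimension. *)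

(* Defs.v *)
From mathcomp Require Import all_boot.
Set Implicit Arguments. Unset Strict Implicit. Unset Printing Implicit Defensive.

(* Generators X = {x_1,...,x_n} are represented by 'I_n; words of the free
   monoid by seq 'I_n.  A presentation of skew type is encoded by its
   "partner" function: partner i j = (k,l) means that the defining relation
   containing x_i x_j is x_i x_j = x_k x_l (and partner i i = (i,i)). *)

Definition skew_type (n : nat) (partner : 'I_n -> 'I_n -> 'I_n * 'I_n) : Prop :=
  forall i j : 'I_n,
    (i = j -> partner i j = (i, i)) /\
    (i <> j ->
       (partner i j).1 <> (partner i j).2 /\
       partner i j <> (i, j) /\
       partner (partner i j).1 (partner i j).2 = (i, j)).

Definition right_nondegenerate (n : nat) (partner : 'I_n -> 'I_n -> 'I_n * 'I_n) : Prop :=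
  forall x z : 'I_n, exists y : 'I_n, (partner x y).1 = z.

(* The congruence on words generated by the defining relations;
   S = (free monoid on 'I_n) / weq. *)
Inductive weq (n : nat) (partner : 'I_n -> 'I_n -> 'I_n * 'I_n) :
    seq 'I_n -> seq 'I_n -> Prop :=
  | weq_refl u : weq partner u u
  | weq_sym u v : weq partner u v -> weq partner v u
  | weq_trans u v w : weq partner u v -> weq partner v w -> weq partner u w
  | weq_step u1 u2 a b :
      weq partner (u1 ++ [:: a; b] ++ u2)
                  (u1 ++ [:: (partner a b).1; (partner a b).2] ++ u2).

(* a subset of S given as a predicate on words (assumed weq-closed where relevant) *)
Definition is_ideal (n : nat) (partner : 'I_n -> 'I_n -> 'I_n * 'I_n)
    (I : seq 'I_n -> Prop) : Prop :=
  (exists w, I w) /\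
  (forall w u v, I w -> I (u ++ w ++ v)).

Definition in_left_ideal (n : nat) (partner : 'I_n -> 'I_n -> 'I_n * 'I_n)
    (y : 'I_n) (w : seq 'I_n) : Prop :=
  exists v, weq partner w (y :: v).

Definition in_SY (n : nat) (partner : 'I_n -> 'I_n -> 'I_n * 'I_n)
    (Y : {set 'I_n}) (w : seq 'I_n) : Prop :=
  forall y, y \in Y -> in_left_ideal partner y w.

Definition in_Si (n : nat) (partner : 'I_n -> 'I_n -> 'I_n * 'I_n)
    (i : nat) (w : seq 'I_n) : Prop :=
  exists Y : {set 'I_n}, #|Y| = i /\ in_SY partner Y w.

Definition power_word (n : nat) (ya : seq ('I_n * nat)) : seq 'I_n :=
  flatten [seq nseq p.2 p.1 | p <- ya].

Definition growth_le (n : nat) (partner : 'I_n -> 'I_n -> 'I_n * 'I_n)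
    (m N : nat) : Prop :=
  exists L : seq (seq 'I_n), size L <= N /\
    forall w : seq 'I_n, size w <= m -> exists2 u, u \in L & weq partner w u.

(* With V = K-span{1, x_1, ..., x_n}, V^m has as a K-basis
   the elements of S of length <= m, so dim_K V^m = d(m) and
   GK(K[S]) = limsup_m log d(m) / log m.  "limsup <= d" is expressed as:
   for every rational eps = p/q > 0, eventually d(m) <= m^(d + p/q),
   i.e. d(m)^q <= m^(d*q + p). *)
Definition GKdim_le (n : nat) (partner : 'I_n -> 'I_n -> 'I_n * 'I_n)
    (d : nat) : Prop :=
  forall p q : nat, 0 < p -> 0 < q ->
    exists M, forall m, M <= m ->
      exists N, growth_le partner m N /\ N ^ q <= m ^ (d * q + p).

(* Main.v *)
Require Import Defs.
From mathcomp Require Import all_boot.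
From Stdlib Require Import ClassicalEpsilon.
Set Implicit Arguments. Unset Strict Implicit. Unset Printing Implicit Defensive.

Lemma weq_cat n (P : 'I_n -> 'I_n -> 'I_n * 'I_n) u v p q :
  weq P u v -> weq P (p ++ u ++ q) (p ++ v ++ q).
Proof.
elim=> [w|w1 w2 _ IH|w1 w2 w3 _ IH1 _ IH2|u1 u2 a b].
- exact: weq_refl.
- exact: weq_sym.
- exact: weq_trans IH2.
- have := weq_step P (p ++ u1) (u2 ++ q) a b.
  by rewrite -!catA /=.
Qed.

Lemma weq_cons n (P : 'I_n -> 'I_n -> 'I_n * 'I_n) x u v :
  weq P u v -> weq P (x :: u) (x :: v).
Proof. by move=> H; have := weq_cat [:: x] [::] H; rewrite !cats0. Qed.

Lemma weq_catr n (P : 'I_n -> 'I_n -> 'I_n * 'I_n) u v q :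
  weq P u v -> weq P (u ++ q) (v ++ q).
Proof. by move=> H; have := weq_cat [::] q H. Qed.

Lemma weq_size n (P : 'I_n -> 'I_n -> 'I_n * 'I_n) u v :
  weq P u v -> size u = size v.
Proof.
elim=> [//|w1 w2 _ ->//|w1 w2 w3 _ -> _ ->//|u1 u2 a b].
by rewrite !size_cat.
Qed.

Lemma f_inj n (P : 'I_n -> 'I_n -> 'I_n * 'I_n) x :
  right_nondegenerate P -> injective (fun y => (P x y).1).
Proof.
move=> Hs.
pose g z := odflt z [pick y | (P x y).1 == z].
have gK : cancel g (fun y => (P x y).1).
  move=> z; rewrite /g; case: pickP => [y /eqP //|none].
  by case: (Hs x z) => y Hy; move: (none y); rewrite Hy eqxx.
have bg : bijective g by apply: injF_bij; exact: can_inj gK.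
have := (bij_can_sym bg (fun y => (P x y).1)).2 gK.
exact: can_inj.
Qed.

Definition Lset n (P : 'I_n -> 'I_n -> 'I_n * 'I_n) (w : seq 'I_n) : {set 'I_n} :=
  [set z | if excluded_middle_informative (in_left_ideal P z w) then true else false].

Lemma inL n (P : 'I_n -> 'I_n -> 'I_n * 'I_n) z w :
  z \in Lset P w <-> in_left_ideal P z w.
Proof. by rewrite inE; case: excluded_middle_informative. Qed.

Lemma left_mul n (P : 'I_n -> 'I_n -> 'I_n * 'I_n) x z w :
  in_left_ideal P z w -> in_left_ideal P (P x z).1 (x :: w).
Proof.
case=> v Hv; exists ((P x z).2 :: v).
apply: weq_trans (weq_cons x Hv) _.
exact: (weq_step P [::] v x z).
Qed.

Lemma L_cons n (P : 'I_n -> 'I_n -> 'I_n * 'I_n) x w :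
  skew_type P -> right_nondegenerate P ->
  x \notin Lset P w -> (#|Lset P w|).+1 <= #|Lset P (x :: w)|.
Proof.
move=> Hsk Hnd Hx.
have fxx : (P x x).1 = x by rewrite (proj1 (Hsk x x) erefl).
have -> : #|Lset P w| = #|[set (P x z).1 | z in Lset P w]|.
  by rewrite card_imset //; exact: f_inj.
have Hn : x \notin [set (P x z).1 | z in Lset P w].
  apply/imsetP => -[z Hz E].
  have : z = x by apply: (@f_inj n P x Hnd) => /=; rewrite fxx.
  by move=> Ez; rewrite -Ez Hz in Hx.
have := cardsU1 x [set (P x z).1 | z in Lset P w]; rewrite Hn add1n => <-; apply: subset_leq_card.
apply/subsetP => z; rewrite in_setU1 => /orP[/eqP->|/imsetP[y Hy ->]]; apply/inL.
- by exists w; exact: weq_refl.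
- by apply: left_mul; apply/inL.
Qed.

Lemma L_cons_le n (P : 'I_n -> 'I_n -> 'I_n * 'I_n) x w :
  right_nondegenerate P -> #|Lset P w| <= #|Lset P (x :: w)|.
Proof.
move=> Hnd.
have -> : #|Lset P w| = #|[set (P x z).1 | z in Lset P w]|.
  by rewrite card_imset //; exact: f_inj.
apply: subset_leq_card; apply/subsetP => z /imsetP[y Hy ->]; apply/inL.
by apply: left_mul; apply/inL.
Qed.

Lemma L_weq n (P : 'I_n -> 'I_n -> 'I_n * 'I_n) w w' :
  weq P w w' -> Lset P w = Lset P w'.
Proof.
move=> H; apply/setP => z; apply/idP/idP => /inL [v Hv]; apply/inL; exists v.
- exact: weq_trans (weq_sym H) Hv.
- exact: weq_trans H Hv.
Qed.

Lemma power_cons n (y : 'I_n) a rest :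
  y :: power_word ((y, a) :: rest) = power_word ((y, a.+1) :: rest).
Proof. by []. Qed.

Lemma claim n (P : 'I_n -> 'I_n -> 'I_n * 'I_n) :
  skew_type P -> right_nondegenerate P ->
  forall m w y v, size w = m -> weq P w (y :: v) ->
  exists a rest, weq P w (power_word ((y, a.+1) :: rest)) /\
    (size rest).+1 <= #|Lset P w|.
Proof.
move=> Hsk Hnd m; elim: m {-2}m (leqnn m) => [|m IH] k Hk w y v Hs Hw.
  by move: (weq_size Hw); rewrite Hs; move: Hk; rewrite leqn0 => /eqP->.
have Lw : Lset P w = Lset P (y :: v) := L_weq Hw.
have sv : size v < k by move: (weq_size Hw); rewrite Hs /= => ->.
have Hv : size v <= m by rewrite -ltnS (leq_trans sv Hk).
case: (boolP (y \in Lset P v)) => Hy.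
- case/inL: Hy => t Ht.
  have [a [rest [H1 H2]]] := IH _ Hv v y t erefl Ht.
  exists a.+1, rest; split.
    apply: weq_trans Hw _; rewrite -power_cons; exact: weq_cons.
  by rewrite Lw (leq_trans H2) // L_cons_le.
- case: v Hw Hy Lw Hv sv => [|z v] Hw Hy Lw Hv sv.
    exists 0, [::]; split; first by rewrite /power_word /=.
    rewrite card_gt0; apply/set0Pn; exists y; apply/inL; exists [::]; exact: Hw.
  have [a [rest [H1 H2]]] := IH _ Hv (z :: v) z v erefl (weq_refl _ _).
  exists 0, ((z, a.+1) :: rest); split.
    apply: weq_trans Hw _; exact: weq_cons.
  by rewrite Lw /= (leq_trans _ (L_cons Hsk Hnd Hy)).
Qed.

Lemma SY_left n (P : 'I_n -> 'I_n -> 'I_n * 'I_n) x Y w :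
  in_SY P Y w -> in_SY P [set (P x z).1 | z in Y] (x :: w).
Proof. by move=> H y /imsetP[z Hz ->]; apply: left_mul; apply: H. Qed.

Lemma SY_right n (P : 'I_n -> 'I_n -> 'I_n * 'I_n) Y w v :
  in_SY P Y w -> in_SY P Y (w ++ v).
Proof.
move=> H y Hy; case: (H y Hy) => t Ht; exists (t ++ v).
exact: (weq_catr v Ht).
Qed.

Lemma Si_closed n (P : 'I_n -> 'I_n -> 'I_n * 'I_n) i w u v :
  right_nondegenerate P -> in_Si P i w -> in_Si P i (u ++ w ++ v).
Proof.
move=> Hnd [Y [HY H]].
have H1 := SY_right v H.
elim: u => [|x u [Z [HZ IH]]]; first by exists Y.
exists [set (P x z).1 | z in Z]; split.
  by rewrite card_imset //; exact: f_inj.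
exact: SY_left.
Qed.

Lemma SY_exists n (P : 'I_n -> 'I_n -> 'I_n * 'I_n) k :
  skew_type P -> right_nondegenerate P -> k <= n ->
  exists w (Y : {set 'I_n}), #|Y| = k /\ in_SY P Y w.
Proof.
move=> Hsk Hnd; elim: k => [_|k IH Hk].
  exists [::], set0; split; first by rewrite cards0.
  by move=> y; rewrite inE.
have [w [Y [HY H]]] := IH (ltnW Hk).
have : ~~ ([set: 'I_n] \subset Y).
  apply/negP => /subset_leq_card; rewrite cardsT card_ord HY.
  by rewrite leqNgt Hk.
case/subsetPn => x _ Hx.
have fxx : (P x x).1 = x by rewrite (proj1 (Hsk x x) erefl).
have Hn : x \notin [set (P x z).1 | z in Y].
  apply/imsetP => -[z Hz E].
  have : z = x by apply: (@f_inj n P x Hnd) => /=; rewrite fxx.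
  by move=> Ez; rewrite -Ez Hz in Hx.
exists (x :: w), (x |: [set (P x z).1 | z in Y]); split.
  rewrite cardsU1 Hn card_imset ?HY //; exact: f_inj.
move=> y; rewrite in_setU1 => /orP[/eqP->|Hy].
  by exists w; exact: weq_refl.
exact: SY_left H y Hy.
Qed.

Lemma leq_expl a b e : a <= b -> a ^ e <= b ^ e.
Proof. by move=> H; elim: e => // e IH; rewrite !expnS leq_mul. Qed.

Lemma power_word_cons n (p : 'I_n * nat) ya :
  power_word (p :: ya) = nseq p.2 p.1 ++ power_word ya.
Proof. by []. Qed.

Lemma power_elem_le n (ya : seq ('I_n * nat)) p :
  p \in ya -> p.2 <= size (power_word ya).
Proof.
elim: ya => // q ya IH; rewrite in_cons power_word_cons size_cat size_nseq.
case/orP => [/eqP->|H]; first exact: leq_addr.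
by rewrite (leq_trans (IH H)) // leq_addl.
Qed.

Lemma power_word_pad n (ya : seq ('I_n * nat)) y k :
  power_word (ya ++ nseq k (y, 0)) = power_word ya.
Proof.
elim: ya => [|q ya IH]; last by rewrite cat_cons !power_word_cons IH.
by elim: k.
Qed.

Lemma tuple_of n m (ya : seq ('I_n * nat)) :
  size ya <= n -> (forall p, p \in ya -> p.2 <= m) ->
  exists t : n.-tuple ('I_n * 'I_m.+1),
    power_word [seq (pr.1, val pr.2) | pr <- t] = power_word ya.
Proof.
move=> Hs Hm.
have [ya' [H1 H2 H3]] : exists ya', [/\ size ya' = n,
    power_word ya' = power_word ya & forall p, p \in ya' -> p.2 <= m].
  case: (ltnP (size ya) n) => Hlt; last first.
    by exists ya; split => //; apply/eqP; rewrite eqn_leq Hs Hlt.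
  have y0 : 'I_n by exact: (Ordinal (leq_ltn_trans (leq0n _) Hlt)).
  exists (ya ++ nseq (n - size ya) (y0, 0)); split.
  - by rewrite size_cat size_nseq subnKC.
  - exact: power_word_pad.
  - move=> p; rewrite mem_cat => /orP[/Hm//|/nseqP[-> _]] //.
have Hsz : size [seq (pr.1, (inord pr.2 : 'I_m.+1)) | pr <- ya'] == n.
  by rewrite size_map H1.
exists (Tuple Hsz) => /=; rewrite -map_comp -H2; congr power_word.
rewrite -[RHS]map_id; apply/eq_in_map => -[a b] Hab /=.
by rewrite inordK // ltnS (H3 _ Hab).
Qed.

Theorem theorem4p1 (n : nat) (partner : 'I_n -> 'I_n -> 'I_n * 'I_n) :
  skew_type partner -> right_nondegenerate partner ->
  (* (1) *)
  ((forall i, 1 <= i <= n -> is_ideal partner (in_Si partner i)) /\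
   (forall w, in_SY partner [set: 'I_n] w <-> in_Si partner n w) /\
   (forall i w, 1 <= i < n -> in_Si partner i.+1 w -> in_Si partner i w)) /\
  (* (2) *)
  (forall w : seq 'I_n, exists ya : seq ('I_n * nat),
      size ya <= n /\ weq partner w (power_word ya)) /\
  (* in particular *)
  GKdim_le partner n.
Proof.
move=> Hsk Hnd.
have P2 : forall w : seq 'I_n, exists ya : seq ('I_n * nat),
    size ya <= n /\ weq partner w (power_word ya).
  case=> [|y v]; first by exists [::]; split => //; exact: weq_refl.
  have [a [rest [H1 H2]]] := claim Hsk Hnd erefl (weq_refl _ (y :: v)).
  exists ((y, a.+1) :: rest); split => //.
  apply: leq_trans H2 _; rewrite -[X in _ <= X](card_ord n) -cardsT.
  exact: subset_leq_card (subsetT _).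
split; [split; [|split]|split] => //.
- move=> i /andP[_ Hi]; split.
    have [w [Y [HY H]]] := SY_exists Hsk Hnd Hi.
    by exists w, Y.
  by move=> w u v; exact: Si_closed.
- move=> w; split.
    by move=> H; exists setT; rewrite cardsT card_ord.
  case=> Y [HY H] y _; apply: H.
  have -> : Y = setT.
    apply/eqP; rewrite eqEcard subsetT cardsT card_ord HY leqnn //.
  by rewrite inE.
- move=> i w _ [Y [HY H]].
  have : 0 < #|Y| by rewrite HY.
  rewrite card_gt0 => /set0Pn [y Hy].
  exists (Y :\ y); split.
    by move: (cardsD1 y Y); rewrite Hy HY add1n => -[].
  by move=> z /setD1P[_ Hz]; apply: H.
- move=> p q Hp Hq.
  exists ((2 * n) ^ (n * q)).+1 => m Hm.
  have m0 : 0 < m by apply: leq_trans Hm.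
  exists ((n * m.+1) ^ n); split.
    exists [seq power_word [seq (pr.1, val pr.2) | pr <- val t]
           | t <- enum {: n.-tuple ('I_n * 'I_m.+1)}]; split.
      by rewrite size_map -cardE card_tuple card_prod !card_ord.
    move=> w Hw.
    have [ya [Hs Hya]] := P2 w.
    have Hb : forall p, p \in ya -> p.2 <= m.
      by move=> pr Hpr; apply: leq_trans (power_elem_le Hpr) _; rewrite -(weq_size Hya).
    have [t Ht] := @tuple_of n m ya Hs Hb.
    exists (power_word ya) => //; rewrite -Ht.
    by apply: map_f; rewrite mem_enum.
  rewrite -expnM.
  apply: (@leq_trans (((2 * n) * m) ^ (n * q))).
    apply: leq_expl; rewrite [2 * n]mulnC -mulnA; apply: leq_mul => //.
    by rewrite mul2n -addnn -addn1 leq_add2l.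
  rewrite expnMn expnD [m ^ _ * _]mulnC leq_mul2r; apply/orP; right.
  apply: (@leq_trans m); first exact: ltnW.
  by rewrite -{1}(expn1 m) leq_pexp2l.
Qed.
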